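(* If $\lim_{|x|\to\infty}\int_{-\infty}^{\infty}G(x,t)\,dt=0$, then $$\lim_{N\to\infty}\sup_{x\in\mathbb R}\int_{-\infty}^{-N}G(x,t)\,dt=0\quad\text{and}\quad \lim_{N\to\infty}\sup_{x\in\mathbb R}\int_{N}^{\infty}G(x,t)\,dt=0.$$
   Context: Let $q:\mathbb R\to\mathbb R$ be measurable with $q\in L_1^{\mathrm{loc}}(\mathbb R)$ and $q(x)\ge1$ a.e. A principal fundamental system of solutions (PFSS) of $z''=q(x)z$ is a pair $u,v$ of solutions ($C^1$, derivative locally absolutely continuous, equation a.e.) such that for all $x$: $u>0$, $v>0$, $u'<0$, $v'>0$, $v'u-u'v=1$, $u(x)=v(x)\int_x^\infty v(t)^{-2}dt$, and $u,u'\to0$ as $x\to\infty$, $v,v'\to0$ as $x\to-\infty$, $v,v'\to\infty$ as $x\to\infty$, $u,|u'|\to\infty$ as $x\to-\infty$. Fix a PFSS $\{u,v\}$. The Green function is $G(x,t)=u(x)v(t)$ for $x\ge t$ and $G(x,t)=u(t)v(x)$ for $x\le t$. *)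

(* Defs.v *)
From HB Require Import structures.
From mathcomp Require Import all_boot all_order all_algebra.
From mathcomp Require Import all_classical all_reals all_analysis.
Set Implicit Arguments. Unset Strict Implicit. Unset Printing Implicit Defensive.
Import Order.TTheory GRing.Theory Num.Theory.
Import numFieldNormedType.Exports.
Local Open Scope classical_set_scope.
Local Open Scope ring_scope.

Section defs.
Context {R : realType}.

Definition abs_continuous_on (a b : R) (f : R -> R) : Prop :=
  forall eps : R, 0 < eps -> exists2 delta : R, 0 < delta &
    forall (n : nat) (l r : 'I_n -> R),
      (forall i, a <= l i /\ l i <= r i /\ r i <= b) ->
      (forall i j, i != j -> r i <= l j \/ r j <= l i) ->
      \sum_(i < n) (r i - l i) < delta ->
      \sum_(i < n) `|f (r i) - f (l i)| < eps.

Definition is_solution (q z : R -> R) : Prop :=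
  [/\ (forall x, derivable z x 1),
      continuous ((derive1 z)),
      (forall a b, a <= b -> abs_continuous_on a b ((derive1 z))) &
      {ae (@lebesgue_measure R), forall x,
          derivable ((derive1 z)) x 1 /\ derive1 (derive1 z) x = q x * z x}].

Definition PFSS (q u v : R -> R) : Prop :=
  [/\ is_solution q u, is_solution q v,
      (forall x, [/\ 0 < u x, 0 < v x, (derive1 u) x < 0, 0 < (derive1 v) x &
                     (derive1 v) x * u x - (derive1 u) x * v x = 1]),
      (forall x, ((u x)%:E =
         (v x)%:E * (\int[@lebesgue_measure R]_(t in `[x, +oo[) ((v t ^+ 2)^-1)%:E))%E) &
      [/\ u x @[x --> +oo] --> 0, (derive1 u) x @[x --> +oo] --> 0,
          v x @[x --> -oo] --> 0 & (derive1 v) x @[x --> -oo] --> 0] /\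
      [/\ v x @[x --> +oo] --> +oo, (derive1 v) x @[x --> +oo] --> +oo,
          u x @[x --> -oo] --> +oo & `|(derive1 u) x| @[x --> -oo] --> +oo]].

Definition Green (u v : R -> R) (x t : R) : R :=
  if t <= x then u x * v t else u t * v x.

End defs.

(* Main.v *)
Require Import Defs.
From HB Require Import structures.
From mathcomp Require Import all_boot all_order all_algebra.
From mathcomp Require Import all_classical all_reals all_analysis.
From mathcomp Require Import measurable_realfun.
Import Order.TTheory GRing.Theory Num.Theory.
Import numFieldNormedType.Exports.
Local Open Scope classical_set_scope.
Local Open Scope ring_scope.

Section H.
Context {R : realType}.

Lemma ev_pinfty (F : R -> \bar R) : F x @[x --> +oo] --> 0%E ->
  forall e : R, 0 < e -> exists M : R, forall x, M < x -> (F x <= e%:E)%E.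
Proof.
move=> /fine_cvgP[Ffin /cvgrPdist_le Fc] e e0.
have [M [Mr HM]] := filterI Ffin (Fc e e0).
exists M => x Mx; have [fx dx] := HM x Mx.
rewrite -(fineK fx) lee_fin; move: dx; rewrite sub0r normrN => /(le_trans (ler_norm _)).
done.
Qed.

Lemma ev_ninfty (F : R -> \bar R) : F x @[x --> -oo] --> 0%E ->
  forall e : R, 0 < e -> exists M : R, forall x, x < M -> (F x <= e%:E)%E.
Proof.
move=> /fine_cvgP[Ffin /cvgrPdist_le Fc] e e0.
have [M [Mr HM]] := filterI Ffin (Fc e e0).
exists M => x Mx; have [fx dx] := HM x Mx.
rewrite -(fineK fx) lee_fin; move: dx; rewrite sub0r normrN => /(le_trans (ler_norm _)).
done.
Qed.

Lemma der_cont (f : R -> R) : (forall x, derivable f x 1) -> continuous f.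
Proof. by move=> d x; apply/differentiable_continuous; rewrite -derivable1_diffP. Qed.

Lemma dec_of (f : R -> R) : (forall x, derivable f x 1) -> (forall x, derive1 f x < 0) ->
  forall x y, x <= y -> f y <= f x.
Proof.
move=> d dn x y xy.
apply: (@ler0_derive1_le_cc R f x y (fun z _ => d z) (fun z _ => ltW (dn z))).
- by apply: continuous_subspaceT; exact: der_cont.
- by rewrite in_itv /= lexx xy.
- by rewrite in_itv /= lexx xy.
- done.
Qed.

Lemma inc_of (f : R -> R) : (forall x, derivable f x 1) -> (forall x, 0 < derive1 f x) ->
  forall x y, x <= y -> f x <= f y.
Proof.
move=> d dn x y xy.
apply: (@ger0_derive1_le_cc R f x y (fun z _ => d z) (fun z _ => ltW (dn z))).
- by apply: continuous_subspaceT; exact: der_cont.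
- by rewrite in_itv /= lexx xy.
- by rewrite in_itv /= lexx xy.
- done.
Qed.


Lemma mG (u v : R -> R) : continuous u -> continuous v ->
  forall x, measurable_fun [set: R] (fun t => (Green u v x t)%:E).
Proof.
move=> cu cv x; apply/measurable_EFinP; rewrite /Green.
apply: measurable_fun_ifT.
- by apply: measurable_fun_ler; [exact: measurable_id | exact: measurable_cst].
- by apply: measurable_funM; [exact: measurable_cst | exact: continuous_measurable_fun].
- by apply: measurable_funM; [exact: continuous_measurable_fun | exact: measurable_cst].
Qed.

Lemma conv (S : R -> \bar R) : (forall N, 0 <= S N)%E ->
  (forall e : R, 0 < e -> exists M : R, forall N, M < N -> (S N <= e%:E)%E) ->
  S N @[N --> +oo] --> 0%E.
Proof.
move=> S0 H; apply/fine_cvgP; split.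
  have [M HM] := H 1 ltr01; exists M; split; first by rewrite num_real.
  by move=> N MN; rewrite ge0_fin_numE // (le_lt_trans (HM N MN)) // ltry.
apply/cvgrPdist_le => e e0; have [M HM] := H e e0.
exists M; split; first by rewrite num_real.
move=> N MN /=; have fS : S N \is a fin_num.
  by rewrite ge0_fin_numE // (le_lt_trans (HM N MN)) // ltry.
rewrite sub0r normrN ger0_norm ?fine_ge0 //.
by rewrite -lee_fin fineK // HM.
Qed.

End H.

Theorem lemma5p3 (R : realType) (q u v : R -> R) :
  locally_integrable [set: R] q ->
  {ae (@lebesgue_measure R), forall x, 1 <= q x} ->
  PFSS q u v ->
  (\int[@lebesgue_measure R]_(t in [set: R]) (Green u v x t)%:E)%E
     @[x --> +oo] --> 0%E ->
  (\int[@lebesgue_measure R]_(t in [set: R]) (Green u v x t)%:E)%E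
     @[x --> -oo] --> 0%E ->
  ereal_sup [set (\int[@lebesgue_measure R]_(t in `]-oo, (- (N : R))%R]) (Green u v x t)%:E)%E
               | x in [set: R]] @[N --> +oo] --> 0%E /\
  ereal_sup [set (\int[@lebesgue_measure R]_(t in `[(N : R), +oo[) (Green u v x t)%:E)%E
               | x in [set: R]] @[N --> +oo] --> 0%E.
Proof.
move=> _ _ [[du _ _ _] [dv _ _ _] pos _ _] Hp Hn.
have cu := @der_cont R u du; have cv := @der_cont R v dv.
have udec := @dec_of R u du (fun x => let: And5 _ _ h _ _ := pos x in h).
have vinc := @inc_of R v dv (fun x => let: And5 _ _ _ h _ := pos x in h).
have up x : 0 < u x by case: (pos x).
have vp x : 0 < v x by case: (pos x).
have G0 x t : (0 <= (Green u v x t)%:E)%E.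
  by rewrite lee_fin /Green; case: ifP => _; apply: mulr_ge0; exact: ltW.
have mGx := @mG R u v cu cv.
have sub x (A : set R) : measurable A ->
   (\int[@lebesgue_measure R]_(t in A) (Green u v x t)%:E <=
    \int[@lebesgue_measure R]_(t in [set: R]) (Green u v x t)%:E)%E.
  move=> mA; apply: ge0_subset_integral => //; exact: mGx.
have mGA x (A : set R) : measurable A -> measurable_fun A (fun t => (Green u v x t)%:E).
  by move=> mA; apply: measurable_funS (mGx x).
split; apply: conv.
- move=> N; have h : [set (\int[@lebesgue_measure R]_(t in `]-oo, (- N)%R]) (Green u v x t)%:E)%E
               | x in [set: R]] (\int[@lebesgue_measure R]_(t in `]-oo, (- N)%R]) (Green u v 0 t)%:E)%E.
    by exists 0.
  exact: le_trans (integral_ge0 _ _) (ereal_sup_ubound h).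
- move=> e e0; have [M1 H1] := @ev_pinfty R _ Hp e e0; have [M2 H2] := @ev_ninfty R _ Hn e e0.
  exists (Num.max M1 (- M2)) => N; rewrite gt_max => /andP[h1 h2].
  have NM2 : - N < M2 by rewrite ltrNl.
  apply: ge_ereal_sup => _ [x _ <-].
  case: (leP (- N) x) => hx.
  + apply: (le_trans _ (le_trans (sub (- N) _ (measurable_itv _)) (H2 _ NM2))).
    apply: ge0_le_integral => //; [exact: mGA; exact: measurable_itv|exact: mGA; exact: measurable_itv|].
    move=> t /=; rewrite in_itv /= => tN.
    rewrite /Green (le_trans tN hx) tN lee_fin ler_wpM2r //; first exact: ltW.
    exact: udec.
  + exact: (le_trans (sub x _ (measurable_itv _)) (H2 _ (lt_trans hx NM2))).
- move=> N; have h : [set (\int[@lebesgue_measure R]_(t in `[N, +oo[) (Green u v x t)%:E)%E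
               | x in [set: R]] (\int[@lebesgue_measure R]_(t in `[N, +oo[) (Green u v 0 t)%:E)%E.
    by exists 0.
  exact: le_trans (integral_ge0 _ _) (ereal_sup_ubound h).
- move=> e e0; have [M1 H1] := @ev_pinfty R _ Hp e e0; have [M2 H2] := @ev_ninfty R _ Hn e e0.
  exists (Num.max M1 (- M2)) => N; rewrite gt_max => /andP[h1 h2].
  apply: ge_ereal_sup => _ [x _ <-].
  case: (leP x N) => hx.
  + apply: (le_trans _ (le_trans (sub N _ (measurable_itv _)) (H1 _ h1))).
    apply: ge0_le_integral => //; [exact: mGA; exact: measurable_itv|exact: mGA; exact: measurable_itv|].
    move=> t /=; rewrite in_itv /= andbT => tN.
    rewrite /Green.
    case: (leP t x) => tx.
      have ex : t = x by apply/eqP; rewrite eq_le tx (le_trans hx tN).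
      have eN : t = N by apply/eqP; rewrite eq_le tN (le_trans tx hx).
      by rewrite -ex eN lexx.
    case: (leP t N) => tN'.
      have eN : t = N by apply/eqP; rewrite eq_le tN tN'.
      rewrite eN lee_fin; apply: ler_wpM2l; [exact: ltW|exact: vinc].
    rewrite lee_fin; apply: ler_wpM2l; [exact: ltW|exact: vinc; exact: ltW].
  + exact: (le_trans (sub x _ (measurable_itv _)) (H1 _ (lt_trans h1 hx))).
Qed.
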